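(* Let $k\ge 2$ and let $\overline{x}_1,\dots,\overline{x}_p\in\Sigma_k^*$ form a $p$-cycle of $\mathcal P_k$, i.e. $\overline{x}_{i}=\mathcal P_k(\overline{x}_{i-1})$ for $i=1,\dots,p$, with indices taken modulo $p$ (so $\overline{x}_0=\overline{x}_p$). For each $i$, let $b_{1,i}>\dots>b_{r_i,i}$ be the letters occurring in $\overline{x}_{i-1}$, and let $n_{(j,i)}=\lfloor\log_k |\overline{x}_{i-1}|_{b_{j,i}}\rfloor$, so that $\overline{x}_i=A_{1,i}b_{1,i}\cdots A_{r_i,i}b_{r_i,i}$ with $A_{j,i}=[|\overline{x}_{i-1}|_{b_{j,i}}]_k$ a word of length $n_{(j,i)}+1$ with nonzero first letter. Then \[\sum_{i=1}^{p}\sum_{j=1}^{r_i} n_{(j,i)}\;\ge\;\sum_{i=1}^{p}\sum_{j=1}^{r_i}k^{n_{(j,i)}}-2\sum_{i=1}^{p} r_i .\] (In particular, if all $r_i$ equal a common value $r$, the right-hand side is $\sum_{i,j}k^{n_{(j,i)}}-2pr$.)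
   Context: Fix an integer $k\ge 2$ and the alphabet $\Sigma_k=\{0,1,\dots,k-1\}$. A word is a finite nonempty string of letters of $\Sigma_k$ (leading zeros allowed); $\Sigma_k^*$ denotes the set of words. For a word $x$, $|x|$ denotes its length and $|x|_i$ the number of occurrences of the letter $i$ in $x$. For a positive integer $c$, $[c]_k$ denotes its standard base-$k$ representation without leading zeros, viewed as a word over $\Sigma_k$; it has $\lfloor\log_k c\rfloor+1$ letters. The map $\mathcal P_k:\Sigma_k^*\to\Sigma_k^*$ is defined as follows: if $b_1>b_2>\dots>b_r$ are exactly the letters occurring in $x$ (i.e. those with $|x|_{b_j}\neq 0$), then $\mathcal P_k(x)=[|x|_{b_1}]_k\,b_1\,[|x|_{b_2}]_k\,b_2\cdots[|x|_{b_r}]_k\,b_r$ (concatenation). A $p$-cycle is a list of words $\overline x_1,\dots,\overline x_p$ with $\mathcal P_k(\overline x_{i})=\overline x_{i+1}$ for $1\le i<p$ and $\mathcal P_k(\overline x_p)=\overline x_1$. *)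

(* Defs.v *)
From mathcomp Require Import all_boot.
Set Implicit Arguments. Unset Strict Implicit. Unset Printing Implicit Defensive.

Definition is_word (k : nat) (x : seq nat) : bool :=
  (x != [::]) && all (fun a => a < k) x.

(* [c]_k : standard base-k representation of c > 0, most significant digit
   first, of length trunc_log k c + 1 = floor(log_k c) + 1. *)
Definition base_repr (k c : nat) : seq nat :=
  [seq (c %/ k ^ (trunc_log k c - i)) %% k | i <- iota 0 (trunc_log k c).+1].

Definition letters (k : nat) (x : seq nat) : seq nat :=
  [seq b <- rev (iota 0 k) | b \in x].

Definition Pk (k : nat) (x : seq nat) : seq nat :=
  flatten [seq base_repr k (count_mem b x) ++ [:: b] | b <- letters k x].

(* Main.v *)
Require Import Defs.
From mathcomp Require Import all_boot zify.

Lemma sum_count k x : all (fun a => a < k) x ->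
  \sum_(b <- iota 0 k) count_mem b x = size x.
Proof.
elim: x => [|a x IH] /=; first by rewrite big1.
move=> /andP[ak /IH {}IH].
rewrite big_split /= IH -add1n; congr (_ + _).
have -> : \sum_(b <- iota 0 k) (a == b) = \sum_(b <- iota 0 k | a == b) 1.
  by rewrite [RHS]big_mkcond /=; apply: eq_bigr => b _; case: (a == b).
rewrite sum1_count.
have -> : count [pred b | a == b] (iota 0 k) = count_mem a (iota 0 k).
  by apply: eq_count => b /=; rewrite eq_sym.
by rewrite count_uniq_mem ?iota_uniq // mem_iota ak.
Qed.

Lemma size_letters k x : is_word k x ->
  \sum_(b <- letters k x) count_mem b x = size x.
Proof.
move=> /andP[_ hx]; rewrite /letters big_filter /=.
rewrite -(@sum_count k x hx).
transitivity (\sum_(b <- rev (iota 0 k)) count_mem b x).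
  by rewrite big_mkcond /=; apply: eq_bigr => b _; case: ifPn => // /count_memPn ->.
by apply: perm_big; rewrite perm_rev.
Qed.

Lemma size_flat_map (f : nat -> seq nat) l :
  size (flatten [seq f b | b <- l]) = \sum_(b <- l) size (f b).
Proof. by elim: l => [|a l IH] /=; rewrite ?big_nil ?big_cons // size_cat IH. Qed.

Lemma size_Pk k x : size (Pk k x) =
  \sum_(b <- letters k x) trunc_log k (count_mem b x) + 2 * size (letters k x).
Proof.
rewrite /Pk size_flat_map.
elim: (letters k x) => [|a l IH]; rewrite ?big_nil ?big_cons //=.
rewrite size_cat IH /base_repr size_map size_iota /=.
rewrite mulnS; lia.
Qed.

Lemma sum_rot p (f : nat -> nat) : 0 < p ->
  \sum_(i < p) f (i.+1 %% p) = \sum_(i < p) f i.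
Proof.
case: p => // p _.
rewrite big_ord_recr big_ord_recl /= modnn addnC; congr (_ + _).
apply: eq_bigr => i _ /=; rewrite modn_small //.
by rewrite ltnS.
Qed.

Theorem theorem3 (k p : nat) (xs : nat -> seq nat) :
  2 <= k -> 0 < p ->
  (forall i, i < p -> is_word k (xs i)) ->
  (forall i, i < p -> Pk k (xs i) = xs (i.+1 %% p)) ->
  \sum_(i < p) \sum_(b <- letters k (xs i)) k ^ trunc_log k (count_mem b (xs i))
  <= \sum_(i < p) \sum_(b <- letters k (xs i)) trunc_log k (count_mem b (xs i))
     + 2 * \sum_(i < p) size (letters k (xs i)).
Proof.
move=> k2 p0 hw hP.
apply: (@leq_trans (\sum_(i < p) size (xs i))).
  apply: leq_sum => i _; rewrite -(@size_letters k (xs i) (hw _ (ltn_ord i))).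
  rewrite !big_seq; apply: leq_sum => b; rewrite mem_filter => /andP[bx _].
  by apply: trunc_logP => //; rewrite -has_count has_pred1.
rewrite -(@sum_rot p (fun i => size (xs i)) p0).
rewrite big_distrr -big_split /=.
apply: leq_sum => i _; by rewrite -hP // size_Pk.
Qed.
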